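(* Let $a_1,\dots,a_n$ be positive integers, let $\mathcal{G}=\mathcal{G}[a_1,\dots,a_n]$, let $\mathcal{G}_{\leftrightarrow}=\mathcal{G}[a_n,\dots,a_2,a_1,a_1,a_2,\dots,a_n]$ (the palindromification of $\mathcal{G}$), and let $\mathcal{G}'=\mathcal{G}[a_2,\dots,a_n]$. Then \[ m(\mathcal{G}_{\leftrightarrow})=m(\mathcal{G})^2+m(\mathcal{G}')^2. \]
   Context: A tile is a unit square in the plane with sides parallel to the coordinate axes, viewed as a graph with 4 vertices and 4 edges. A snake graph with $d\ge 1$ tiles is a planar graph which is the union of tiles $G_1,\dots,G_d$ such that for each $i$, $G_{i+1}$ is the translate of $G_i$ by $(0,1)$ or by $(1,0)$; thus $G_i$ and $G_{i+1}$ share exactly one edge $e_i$. A sign function on a snake graph is a map $f$ from its edges to $\{+,-\}$ such that in every tile the north and west edges have the same sign, the south and east edges have the same sign, and the north and south edges have opposite signs. For a sequence $(a_1,\dots,a_n)$ of positive integers with $d=a_1+\cdots+a_n-1\ge 1$, $\mathcal{G}[a_1,\dots,a_n]$ is the unique snake graph with tiles $G_1,\dots,G_d$ for which there exist a sign function $f$ and an edge $e_d\in\{\text{north edge of }G_d,\text{east edge of }G_d\}$ such that, with $e_0$ the south edge of $G_1$ and $e_i$ ($1\le i\le d-1$) the edge shared by $G_i,G_{i+1}$, the sequence $(f(e_0),\dots,f(e_d))$ consists of $a_1$ copies of a sign $s$, then $a_2$ copies of $-s$, then $a_3$ copies of $s$, and so on alternately. By convention $\mathcal{G}[1]$ is a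 single edge, and the snake graph of the empty sequence (which occurs as $\mathcal{G}'$ when $n=1$) is a single edge. For a graph $\mathcal{H}$, $m(\mathcal{H})$ denotes its number of perfect matchings (a single edge has exactly one). *)

(* Defs.v *)
From mathcomp Require Import all_boot.
Set Implicit Arguments. Unset Strict Implicit. Unset Printing Implicit Defensive.

(* A lattice point; tiles are identified by their lower-left corner. *)
Definition point := (nat * nat)%type.

(* A unit edge: (x, y, h).  If h = true it is the horizontal segment from
   (x,y) to (x+1,y); if h = false it is the vertical segment from (x,y) to
   (x,y+1). *)
Definition edge := (nat * nat * bool)%type.

Definition esrc (e : edge) : point := (e.1.1, e.1.2).
Definition edst (e : edge) : point :=
  if e.2 then (e.1.1.+1, e.1.2) else (e.1.1, e.1.2.+1).

Definition south (p : point) : edge := (p.1, p.2, true).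
Definition north (p : point) : edge := (p.1, p.2.+1, true).
Definition west  (p : point) : edge := (p.1, p.2, false).
Definition east  (p : point) : edge := (p.1.+1, p.2, false).

Definition step (p : point) (b : bool) : point :=
  if b then (p.1, p.2.+1) else (p.1.+1, p.2).

(* A snake graph with d >= 1 tiles G_1,...,G_d is encoded (up to translation)
   by the list D of the d-1 translation directions, G_1 having its
   lower-left corner at (0,0). *)
Fixpoint tiles_from (p : point) (D : seq bool) : seq point :=
  p :: (if D is b :: D' then tiles_from (step p b) D' else [::]).

Definition tiles (D : seq bool) : seq point := tiles_from (0, 0) D.

Definition edges (D : seq bool) : seq edge :=
  undup (flatten [seq [:: south p; north p; west p; east p] | p <- tiles D]).

Definition verts (D : seq bool) : seq point :=
  undup (flatten [seq [:: esrc e; edst e] | e <- edges D]).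

Definition incident (e : edge) (v : point) : bool := (esrc e == v) || (edst e == v).

Definition perfect_matching (D : seq bool) (S : {set 'I_(size (edges D))}) : bool :=
  all (fun v => count (fun i : 'I_(size (edges D)) =>
                         (i \in S) && incident (nth (0, 0, true) (edges D) i) v)
                      (enum 'I_(size (edges D))) == 1)
      (verts D).

Arguments perfect_matching : clear implicits.

Definition num_pm (D : seq bool) : nat :=
  #|[set S : {set 'I_(size (edges D))} | perfect_matching D S]|.

Definition sign_function (D : seq bool) (f : edge -> bool) : Prop :=
  forall p, p \in tiles D ->
    [/\ f (north p) = f (west p), f (south p) = f (east p) & f (north p) != f (south p)].

(* The edges e_1, ..., e_d: e_i shared by G_i and G_(i+1) for i < d, and
   e_d the north (eN = true) or east (eN = false) edge of G_d. *)
Fixpoint walk (p : point) (D : seq bool) (eN : bool) : seq edge :=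
  match D with
  | [::] => [:: if eN then north p else east p]
  | b :: D' => (if b then north p else east p) :: walk (step p b) D' eN
  end.

Definition distinguished_edges (D : seq bool) (eN : bool) : seq edge :=
  south (0, 0) :: walk (0, 0) D eN.

Definition sign_blocks (s : bool) (a : seq nat) : seq bool :=
  flatten [seq nseq (nth 0 a i) (if odd i then ~~ s else s) | i <- iota 0 (size a)].

(* When
   d = a_1 + ... + a_n - 1 = 0 (the sequence is empty or [1]) the graph is a
   single edge, and we require D = [::] (D is then irrelevant). *)
Definition is_snake (a : seq nat) (D : seq bool) : Prop :=
  (sumn a <= 1 /\ D = [::]) \/
  (1 < sumn a /\ size D = sumn a - 2 /\
   exists (f : edge -> bool) (eN : bool) (s : bool),
     sign_function D f /\
     map f (distinguished_edges D eN) = sign_blocks s a).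

(* m(G[a]) : a single edge has exactly one perfect matching. *)
Definition m_snake (a : seq nat) (D : seq bool) : nat :=
  if sumn a <= 1 then 1 else num_pm D.

(* Main.v *)
Require Import Defs.
From mathcomp Require Import all_boot zify.
From Stdlib Require Import ArithRing.
Set Implicit Arguments. Unset Strict Implicit. Unset Printing Implicit Defensive.

Fixpoint nsub (E : seq edge) (P : seq edge -> bool) : nat :=
  match E with
  | [::] => P [::]
  | e :: E' => nsub E' (fun L => P (e :: L)) + nsub E' P
  end.

Lemma nsub_ext_sub E P Q : (forall L, subseq L E -> P L = Q L) -> nsub E P = nsub E Q.
Proof.
elim: E P Q => [|e E IH] P Q H /=; first by rewrite H.
rewrite (IH _ (fun L => Q (e :: L))); last first.
  by move=> L hL; apply: H; rewrite /= eqxx.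
rewrite (IH P Q) // => L hL; apply: H; exact: (subseq_trans hL (subseq_cons E e)).
Qed.

Lemma nsub_false E : nsub E (fun _ => false) = 0.
Proof. by elim: E => //= e E ->. Qed.

Definition pinv (P : seq edge -> bool) := forall L1 L2, perm_eq L1 L2 -> P L1 = P L2.

Lemma pinv_cons P e : pinv P -> pinv (fun L => P (e :: L)).
Proof. by move=> H L1 L2 h; apply: H; rewrite perm_cons. Qed.

Lemma nsub_move s1 x s2 P : pinv P -> nsub (s1 ++ x :: s2) P = nsub (x :: s1 ++ s2) P.
Proof.
elim: s1 P => [|y s1 IH] P hP //=.
rewrite !IH //; last exact: pinv_cons.
rewrite /=.
have -> : nsub (s1 ++ s2) (fun L => P [:: y, x & L]) = nsub (s1 ++ s2) (fun L => P [:: x, y & L]).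
  apply: nsub_ext_sub => L _; apply: hP.
  by rewrite -[y :: x :: L]/([:: y] ++ [:: x] ++ L) perm_catCA.
by rewrite !addnA; congr (_ + _); rewrite -!addnA; congr (_ + _); rewrite addnC.
Qed.

Lemma nsub_perm E1 E2 P : pinv P -> perm_eq E1 E2 -> nsub E1 P = nsub E2 P.
Proof.
elim: E1 E2 P => [|x E1 IH] E2 P hP hperm.
  by move: hperm; rewrite perm_sym => /perm_nilP ->.
have xin : x \in E2 by rewrite -(perm_mem hperm) mem_head.
case/splitPr: xin hperm => s1 s2 hperm.
rewrite nsub_move //=.
have h' : perm_eq E1 (s1 ++ s2).
  rewrite -(perm_cons x); apply: (perm_trans hperm); exact: permEl (perm_catCA s1 [:: x] s2).
by rewrite (IH _ _ _ h') ?(IH _ _ _ h') //; exact: pinv_cons.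
Qed.

Definition e0 : edge := (0, 0, true).
Definition sel (E : seq edge) n (S : {set 'I_n}) := [seq nth e0 E (nat_of_ord i) | i <- enum S].

Lemma enum_setE m (S : {set 'I_m}) : enum S = [seq i <- enum 'I_m | i \in S].
Proof. by rewrite enumT. Qed.

Section Split.
Variable n : nat.
Definition hset (p : bool * {set 'I_n}) : {set 'I_n.+1} :=
  (if p.1 then [set ord0] else set0) :|: [set lift ord0 i | i in p.2].
Definition hinv (S : {set 'I_n.+1}) : bool * {set 'I_n} :=
  (ord0 \in S, [set i | lift ord0 i \in S]).

Lemma hset_ord0 p : (ord0 \in hset p) = p.1.
Proof.
rewrite /hset inE; case: p.1; rewrite ?inE ?eqxx //=.
apply/imsetP => -[i _ /eqP]; apply/negP; exact: neq_lift.
Qed.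

Lemma hset_lift p i : (lift ord0 i \in hset p) = (i \in p.2).
Proof.
rewrite /hset inE (mem_imset _ _ (@lift_inj _ ord0)).
case: p.1; rewrite ?inE //= (negbTE (neq_lift _ _)) //.
Qed.

Lemma hsetK : cancel hset hinv.
Proof.
case=> b T; rewrite /hinv hset_ord0; congr (_, _).
by apply/setP => i; rewrite inE hset_lift.
Qed.

Lemma hinvK : cancel hinv hset.
Proof.
move=> S; apply/setP => j; case: (unliftP ord0 j) => [i ->| ->].
  by rewrite hset_lift /= inE.
by rewrite hset_ord0.
Qed.

Lemma enum_hset p : enum (hset p) = (if p.1 then [:: ord0] else [::]) ++ map (lift ord0) (enum p.2).
Proof.
rewrite enum_setE enum_ordSl /= hset_ord0 filter_map (enum_setE p.2).
have -> : [seq i <- enum 'I_n | preim (lift ord0) (fun x => x \in hset p) i] = [seq i <- enum 'I_n | i \in p.2].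
  by apply: eq_filter => i /=; rewrite hset_lift.
by case: p.1.
Qed.
End Split.

Lemma sum_sets E (P : seq edge -> bool) : \sum_(S : {set 'I_(size E)}) (P (sel E S) : nat) = nsub E P.
Proof.
elim: E P => [|e E IH] P /=.
  have h0 (S : {set 'I_0}) : S = set0 by apply/setP => -[].
  rewrite (eq_bigr (fun _ => (P [::] : nat))); last first.
    by move=> S _; rewrite (h0 S) /sel enum_set0.
  by rewrite (big_pred1 set0) // => S; rewrite /= (h0 S) eqxx.
rewrite (reindex (@hset (size E))); last first.
  by exists (@hinv (size E)) => p _; [exact: hsetK | exact: hinvK].
rewrite -(pair_big xpredT xpredT (fun b T => (P (sel (e :: E) (hset (b, T))) : nat))) /=.
rewrite big_bool /= -!IH.
congr (_ + _); apply: eq_bigr => T _; rewrite /sel enum_hset //=.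
  by rewrite -map_comp.
by rewrite -map_comp.
Qed.

Definition pmP (V : seq point) (L : seq edge) : bool :=
  all (fun v => count (fun e => incident e v) L == 1) V.

Lemma num_pm_nsub D : num_pm D = nsub (edges D) (pmP (verts D)).
Proof.
rewrite /num_pm -sum_sets -sum1_card big_mkcond /=.
apply: eq_bigr => S _; rewrite inE /perfect_matching /pmP.
set b1 := all _ _; set b2 := all _ _.
suff -> : b1 = b2 by case: b2.
apply: eq_all => v; congr (_ == 1).
rewrite /sel count_map (enum_setE S) [RHS]count_filter.
by apply: eq_count => i /=; rewrite andbC.
Qed.

Lemma pmP_inv V : pinv (pmP V).
Proof.
move=> L1 L2 /permP h; rewrite /pmP; apply: eq_all => w; by rewrite h.
Qed.

Lemma nsub_zero E P : (forall L, subseq L E -> P L = false) -> nsub E P = 0.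
Proof. by move=> h; rewrite (nsub_ext_sub h) nsub_false. Qed.

Section Ext.
Variables (E E' : seq edge) (V V' : seq point) (u v u' v' : point) (x y z t : edge).
Hypothesis hEV : forall e w, e \in E -> incident e w -> w \in V.
Hypotheses (hu : u \in V) (hv : v \in V) (hu' : u' \notin V) (hv' : v' \notin V).
Hypotheses (huv : u != v) (huv' : u' != v').
Hypothesis hx : forall w, incident x w = (w == u) || (w == u').
Hypothesis hy : forall w, incident y w = (w == v) || (w == v').
Hypothesis hz : forall w, incident z w = (w == u') || (w == v').
Hypothesis ht : forall w, incident t w = (w == u) || (w == v).
Hypothesis hV' : V' =i u' :: v' :: V.
Hypothesis hE' : perm_eq E' (x :: y :: z :: E).

Lemma cnt0 L w : subseq L E -> w \notin V -> count (incident^~ w) L = 0.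
Proof.
move=> hL hw; apply/eqP; rewrite eqn0Ngt -has_count; apply/hasPn => e eL.
apply/negP => hi; have := hEV (mem_subseq hL eL) hi; by rewrite (negbTE hw).
Qed.

Lemma ne_aux a b : a \in V -> b \notin V -> (b == a) = false.
Proof. by move=> ha hb; apply/negbTE; apply: contraNneq hb => ->. Qed.
Lemma n1 : (u' == u) = false. Proof. exact: ne_aux. Qed.
Lemma n2 : (u' == v) = false. Proof. exact: ne_aux. Qed.
Lemma n3 : (v' == u) = false. Proof. exact: ne_aux. Qed.
Lemma n4 : (v' == v) = false. Proof. exact: ne_aux. Qed.
Lemma n5 : (u' == v') = false. Proof. exact/negbTE. Qed.
Lemma n6 : (v' == u') = false. Proof. by rewrite eq_sym; exact/negbTE. Qed.

Lemma pm_gen c L : subseq L E ->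
  pmP V' (c ++ L) = (count (incident^~ u') c == 1) && (count (incident^~ v') c == 1)
                    && pmP V (c ++ L).
Proof.
move=> hL; rewrite /pmP (eq_all_r hV') /= !count_cat !(cnt0 hL) // !addn0 andbA //.
Qed.

Lemma pmz L : subseq L E -> pmP V (z :: L) = pmP V L.
Proof.
move=> hL; apply: eq_in_all => w hw /=; rewrite hz.
have e1 : (w == u') = false by apply/negbTE; apply: contraNneq hu' => <-.
have e2 : (w == v') = false by apply/negbTE; apply: contraNneq hv' => <-.
by rewrite e1 e2.
Qed.

Lemma pmxy L : pmP V [:: x, y & L] = pmP V (t :: L).
Proof.
apply: eq_in_all => w hw /=; rewrite hx hy ht.
have e1 : (w == u') = false by apply/negbTE; apply: contraNneq hu' => <-.
have e2 : (w == v') = false by apply/negbTE; apply: contraNneq hv' => <-.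
rewrite e1 e2 !orbF.
have [->|] := eqVneq w u; first by rewrite (negbTE huv) /= add0n.
by [].
Qed.

Lemma pmyx L : pmP V [:: y, x & L] = pmP V (t :: L).
Proof.
rewrite -pmxy; apply: pmP_inv.
by rewrite -[y :: x :: L]/([:: y] ++ [:: x] ++ L) perm_catCA.
Qed.

Ltac ev c := let L := fresh "L" in let hL := fresh "hL" in intros L hL; rewrite (pm_gen c hL) /= ?hx ?hy ?hz ?eqxx ?n1 ?n2 ?n3 ?n4 ?n5 ?n6 /=.

Lemma extA : nsub E' (pmP V') = nsub E (pmP V) + nsub E (fun L => pmP V (t :: L)).
Proof.
rewrite (nsub_perm (pmP_inv V') hE') /=.
rewrite (@nsub_zero E (fun L => pmP V' [:: x, y, z & L])); last by ev [:: x; y; z].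
rewrite (@nsub_zero E (fun L => pmP V' [:: x, z & L])); last by ev [:: x; z].
rewrite (@nsub_zero E (fun L => pmP V' [:: x & L])); last by ev [:: x].
rewrite (@nsub_zero E (fun L => pmP V' [:: y, z & L])); last by ev [:: y; z].
rewrite (@nsub_zero E (fun L => pmP V' [:: y & L])); last by ev [:: y].
rewrite (@nsub_zero E (fun L => pmP V' L)); last by ev (@nil edge).
rewrite (@nsub_ext_sub E (fun L => pmP V' [:: x, y & L]) (fun L => pmP V (t :: L))); last first.
  by ev [:: x; y]; rewrite pmxy.
rewrite (@nsub_ext_sub E (fun L => pmP V' [:: z & L]) (pmP V)); last first.
  by ev [:: z]; rewrite pmz.
by rewrite !add0n !addn0 addnC.
Qed.

Lemma extz : nsub E' (fun L => pmP V' (z :: L)) = nsub E (pmP V).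
Proof.
rewrite (nsub_perm (pinv_cons z (pmP_inv V')) hE') /=.
rewrite (@nsub_zero E (fun L => pmP V' [:: z, x, y, z & L])); last by ev [:: z; x; y; z].
rewrite (@nsub_zero E (fun L => pmP V' [:: z, x, y & L])); last by ev [:: z; x; y].
rewrite (@nsub_zero E (fun L => pmP V' [:: z, x, z & L])); last by ev [:: z; x; z].
rewrite (@nsub_zero E (fun L => pmP V' [:: z, x & L])); last by ev [:: z; x].
rewrite (@nsub_zero E (fun L => pmP V' [:: z, y, z & L])); last by ev [:: z; y; z].
rewrite (@nsub_zero E (fun L => pmP V' [:: z, y & L])); last by ev [:: z; y].
rewrite (@nsub_zero E (fun L => pmP V' [:: z, z & L])); last by ev [:: z; z].
rewrite (@nsub_ext_sub E (fun L => pmP V' [:: z & L]) (pmP V)); last first.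
  by ev [:: z]; rewrite pmz.
by rewrite !add0n ?addn0.
Qed.

Lemma extx : nsub E' (fun L => pmP V' (x :: L)) = nsub E (fun L => pmP V (t :: L)).
Proof.
rewrite (nsub_perm (pinv_cons x (pmP_inv V')) hE') /=.
rewrite (@nsub_zero E (fun L => pmP V' [:: x, x, y, z & L])); last by ev [:: x; x; y; z].
rewrite (@nsub_zero E (fun L => pmP V' [:: x, x, y & L])); last by ev [:: x; x; y].
rewrite (@nsub_zero E (fun L => pmP V' [:: x, x, z & L])); last by ev [:: x; x; z].
rewrite (@nsub_zero E (fun L => pmP V' [:: x, x & L])); last by ev [:: x; x].
rewrite (@nsub_zero E (fun L => pmP V' [:: x, y, z & L])); last by ev [:: x; y; z].
rewrite (@nsub_zero E (fun L => pmP V' [:: x, z & L])); last by ev [:: x; z].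
rewrite (@nsub_zero E (fun L => pmP V' [:: x & L])); last by ev [:: x].
rewrite (@nsub_ext_sub E (fun L => pmP V' [:: x, y & L]) (fun L => pmP V (t :: L))); last first.
  by ev [:: x; y]; rewrite pmxy.
by rewrite !add0n !addn0.
Qed.

Lemma exty : nsub E' (fun L => pmP V' (y :: L)) = nsub E (fun L => pmP V (t :: L)).
Proof.
rewrite (nsub_perm (pinv_cons y (pmP_inv V')) hE') /=.
rewrite (@nsub_zero E (fun L => pmP V' [:: y, x, y, z & L])); last by ev [:: y; x; y; z].
rewrite (@nsub_zero E (fun L => pmP V' [:: y, x, y & L])); last by ev [:: y; x; y].
rewrite (@nsub_zero E (fun L => pmP V' [:: y, x, z & L])); last by ev [:: y; x; z].
rewrite (@nsub_zero E (fun L => pmP V' [:: y, y, z & L])); last by ev [:: y; y; z].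
rewrite (@nsub_zero E (fun L => pmP V' [:: y, y & L])); last by ev [:: y; y].
rewrite (@nsub_zero E (fun L => pmP V' [:: y, z & L])); last by ev [:: y; z].
rewrite (@nsub_zero E (fun L => pmP V' [:: y & L])); last by ev [:: y].
rewrite (@nsub_ext_sub E (fun L => pmP V' [:: y, x & L]) (fun L => pmP V (t :: L))); last first.
  by ev [:: y; x]; rewrite pmyx.
by rewrite !add0n !addn0.
Qed.
End Ext.

Definition lvl (p : point) := p.1 + p.2.
Definition lastT (D : seq bool) := foldl step (0, 0) D.
Definition f4 (r : point) := [:: south r; north r; west r; east r].
Definition out (p : point) (c : bool) := if c then north p else east p.

Lemma tiles_rcons p D b :
  tiles_from p (rcons D b) = rcons (tiles_from p D) (step (foldl step p D) b).
Proof. by elim: D p => [|c D IH] p //=; rewrite IH. Qed.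

Lemma lvl_step p b : lvl (step p b) = (lvl p).+1.
Proof. by case: b; rewrite /lvl /=; lia. Qed.

Lemma lvl_foldl p D : lvl (foldl step p D) = lvl p + size D.
Proof. by elim: D p => [|b D IH] p /=; rewrite ?addn0 // IH lvl_step addSnnS. Qed.

Lemma tiles_lvl p D r : r \in tiles_from p D ->
  (lvl r < lvl (foldl step p D)) \/ r = foldl step p D.
Proof.
elim: D p => [|b D IH] p /=; first by rewrite inE => /eqP ->; right.
rewrite inE => /orP [/eqP ->|/IH //]; left.
by rewrite lvl_foldl lvl_step /=; lia.
Qed.

Lemma last_in p D : foldl step p D \in tiles_from p D.
Proof. by elim: D p => [|b D IH] p /=; rewrite inE ?eqxx // IH orbT. Qed.

Lemma mem_edges D e : (e \in edges D) = has (fun r => e \in f4 r) (tiles D).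
Proof.
rewrite /edges mem_undup; apply/flatten_mapP/hasP => -[r hr he]; by exists r.
Qed.

Lemma mem_verts D w : (w \in verts D) = has (incident^~ w) (edges D).
Proof.
rewrite /verts mem_undup; apply/flatten_mapP/hasP => -[e he hw]; exists e => //.
  by rewrite /incident; move: hw; rewrite !inE ![w == _]eq_sym.
by rewrite !inE ![w == _]eq_sym.
Qed.

Definition corners (r : point) := [:: r; (r.1.+1, r.2); (r.1, r.2.+1); (r.1.+1, r.2.+1)].

Lemma f4_corner r e w : e \in f4 r -> incident e w -> w \in corners r.
Proof.
case: r => r1 r2.
rewrite /f4 /incident !inE => /or4P [] /eqP -> /orP [] /eqP <- /=.
all: by rewrite ?eqxx ?orbT.
Qed.

Lemma fresh_vert D w : lvl (lastT D) + 2 <= lvl w ->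
  w != ((lastT D).1.+1, (lastT D).2.+1) -> w \notin verts D.
Proof.
rewrite /lastT; move=> hl hw; apply/negP; rewrite mem_verts => /hasP [e].
rewrite mem_edges => /hasP [r hr he] hi.
have := f4_corner he hi; rewrite /corners !inE.
move: hl hw; rewrite /lvl.
case: (tiles_lvl hr) => [|->]; case: (foldl step (0, 0) D) => l1 l2;
  case: w {hi} => w1 w2; case: r {hr he} => r1 r2 /=.
  by rewrite /lvl /=; move=> h2 h1 _ /or4P [] /eqP [] e1 e2; lia.
move=> h1 hw /or4P [] /eqP [] e1 e2; subst; rewrite ?eqxx // in hw; lia.
Qed.

Definition Acnt D := nsub (edges D) (pmP (verts D)).
Definition Bcnt D c := nsub (edges D) (fun L => pmP (verts D) (out (lastT D) c :: L)).

Lemma edges_rcons D b e :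
  (e \in edges (rcons D b)) = (e \in f4 (step (lastT D) b)) || (e \in edges D).
Proof. by rewrite !mem_edges /tiles tiles_rcons has_rcons. Qed.

Lemma f4_edges D r e : r \in tiles D -> e \in f4 r -> e \in edges D.
Proof. by move=> hr he; rewrite mem_edges; apply/hasP; exists r. Qed.

Lemma lastT_in D : lastT D \in tiles D.
Proof. exact: last_in. Qed.

Lemma lastT_rcons D b : lastT (rcons D b) = step (lastT D) b.
Proof. by rewrite /lastT foldl_rcons. Qed.

Section SnakeStep.
Variables (D : seq bool) (b : bool) (p1 p2 : nat).
Hypothesis hP : lastT D = (p1, p2).
Let q := step (p1, p2) b.
Let u : point := q.
Let v : point := (p1.+1, p2.+1).
Let u' : point := if b then (p1, p2.+2) else (p1.+2, p2).
Let v' : point := if b then (p1.+1, p2.+2) else (p1.+2, p2.+1).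
Let x := if b then west q else south q.
Let y := if b then east q else north q.
Let z := if b then north q else east q.
Let t := out (p1, p2) b.
Let E := edges D.
Let V := verts D.

Lemma t_in : t \in E.
Proof. by apply: (f4_edges (lastT_in D)); rewrite hP /t /out; case: b; rewrite !inE eqxx ?orbT. Qed.

Lemma hEV e w : e \in E -> incident e w -> w \in V.
Proof. by move=> he hi; rewrite /V mem_verts; apply/hasP; exists e. Qed.

Lemma hx w : incident x w = (w == u) || (w == u').
Proof. by rewrite /x /u /u' /q /incident; case: b => /=; rewrite ![_ == w]eq_sym. Qed.
Lemma hy w : incident y w = (w == v) || (w == v').
Proof. by rewrite /y /v /v' /q /incident; case: b => /=; rewrite ![_ == w]eq_sym. Qed.
Lemma hz w : incident z w = (w == u') || (w == v').
Proof. by rewrite /z /u' /v' /q /incident; case: b => /=; rewrite ![_ == w]eq_sym. Qed.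
Lemma ht w : incident t w = (w == u) || (w == v).
Proof. by rewrite /t /u /v /q /out /incident; case: b => /=; rewrite ![_ == w]eq_sym. Qed.

Lemma hu : u \in V.
Proof. by rewrite /V mem_verts; apply/hasP; exists t; [exact: t_in | rewrite ht eqxx]. Qed.
Lemma hv : v \in V.
Proof. by rewrite /V mem_verts; apply/hasP; exists t; [exact: t_in | rewrite ht eqxx orbT]. Qed.
Lemma hu' : u' \notin V.
Proof. by apply: fresh_vert; rewrite hP /u' /lvl; case: b => /=; rewrite ?xpair_eqE; lia. Qed.
Lemma hv' : v' \notin V.
Proof. by apply: fresh_vert; rewrite hP /v' /lvl; case: b => /=; rewrite ?xpair_eqE; lia. Qed.
Lemma huv : u != v.
Proof. by rewrite /u /v /q; case: b => /=; rewrite xpair_eqE; lia. Qed.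
Lemma huv' : u' != v'.
Proof. by rewrite /u' /v'; case: b => /=; rewrite xpair_eqE; lia. Qed.

Lemma notin_E e : e \in E -> ~~ incident e u' && ~~ incident e v'.
Proof.
move=> he; apply/andP; split; apply/negP => /(hEV he); by rewrite ?(negbTE hu') ?(negbTE hv').
Qed.

Lemma hEm : edges (rcons D b) =i [:: x, y, z & E].
Proof.
move=> e; rewrite edges_rcons hP -/E /f4 /x /y /z /q !inE.
have tE := t_in; rewrite /t /out /q in tE.
case: b tE => /= tE.
  have [->|ne] := eqVneq e (p1, p2.+1, true); first by rewrite tE !orbT.
  by case: (e == _); case: (e == _); case: (e == _); rewrite ?orbT ?orbF.
have [->|ne] := eqVneq e (p1.+1, p2, false); first by rewrite tE !orbT.

by case: (e == _); case: (e == _); case: (e == _); rewrite ?orbT ?orbF.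
Qed.
Lemma hVm : verts (rcons D b) =i [:: u', v' & V].
Proof.
move=> w; rewrite mem_verts (eq_has_r hEm) /= hx hy hz -/E !inE /V mem_verts -/E.
have hu1 : has (incident^~ u) E by move: hu; rewrite /V mem_verts.
have hv1 : has (incident^~ v) E by move: hv; rewrite /V mem_verts.
have [->|nu] := eqVneq w u; first by rewrite hu1 !orbT.
have [->|nv] := eqVneq w v; first by rewrite hv1 !orbT.
by case: (w == u'); case: (w == v'); rewrite ?orbT.
Qed.

Lemma hEp : perm_eq (edges (rcons D b)) [:: x, y, z & E].
Proof.
apply: uniq_perm; [exact: undup_uniq | | exact: hEm].
have nE e : incident e u' || incident e v' -> e \notin E.
  by move=> h; apply/negP => /notin_E; case/orP: h => ->; rewrite ?andbF.
rewrite /= !inE (undup_uniq _) andbT.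
have xE : (x \in E) = false by apply/negbTE/nE; rewrite !hx eqxx !orbT.
have yE : (y \in E) = false by apply/negbTE/nE; rewrite !hy eqxx !orbT.
have zE : (z \in E) = false by apply/negbTE/nE; rewrite !hz eqxx.
rewrite xE yE zE !orbF andbT.
by rewrite /x /y /z /q; case: b => /=; rewrite !xpair_eqE; lia.
Qed.

Lemma recA : Acnt (rcons D b) = Acnt D + Bcnt D b.
Proof.
rewrite /Acnt /Bcnt hP.
exact: (extA hEV hu hv hu' hv' huv huv' hx hy hz ht hVm hEp).
Qed.

Lemma recB c : Bcnt (rcons D b) c = if c == b then Acnt D else Bcnt D b.
Proof.
rewrite /Bcnt /Acnt lastT_rcons hP.
have -> : out (step (p1, p2) b) c = if c == b then z else y.
  by rewrite /z /y /q /out; case: c; case: b.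
case: (c == b).
  exact: (extz hEV hu hv hu' hv' huv' hx hy hz hVm hEp).
exact: (exty hEV hu hv hu' hv' huv huv' hx hy hz ht hVm hEp).
Qed.
End SnakeStep.

Definition stepAB (st : nat * nat) (f : bool) := (st.1 + st.2, if f then st.1 else st.2).

Lemma pairmap_rcons (T U : Type) (f : T -> T -> U) a s x :
  pairmap f a (rcons s x) = rcons (pairmap f a s) (f (last a s) x).
Proof. by rewrite -cats1 pairmap_cat cats1. Qed.

Lemma base_counts c : (Acnt [::], Bcnt [::] c) = (2, 1).
Proof. by case: c; vm_compute. Qed.

Lemma graph_fold D c :
  (Acnt D, Bcnt D c) = foldl stepAB (1, 1) (pairmap (fun x y => x == y) true (rcons D c)).
Proof.
elim/last_ind: D c => [|D b IH] c; first by rewrite base_counts; case: c.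
case hP: (lastT D) => [p1 p2].
rewrite (recA b hP) (recB b hP) pairmap_rcons foldl_rcons -IH last_rcons.
by rewrite /stepAB /= eq_sym.
Qed.

Lemma num_pm_fold D c :
  num_pm D = (foldl stepAB (1, 1) (pairmap (fun x y => x == y) true (rcons D c))).1.
Proof. by rewrite -graph_fold num_pm_nsub. Qed.

Definition tile_ok (f : edge -> bool) p :=
  [/\ f (north p) = f (west p), f (south p) = f (east p) & f (north p) != f (south p)].

Lemma tile_sign f p dir0 c : tile_ok f p ->
  (f (if dir0 then south p else west p) != f (out p c)) = (dir0 == c).
Proof.
case=> h1 h2 h3; case: dir0; case: c; rewrite /out /= ?h1 ?h2 ?eqxx //.
all: try (rewrite -?h1 -?h2; apply/negbTE).
all: rewrite -?h1 -?h2; first [exact: h3 | rewrite eq_sym; exact: h3].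
Qed.

Lemma sign_pairmap_gen f p dir0 D eN :
  (forall r, r \in tiles_from p D -> tile_ok f r) ->
  pairmap (fun x y => x != y) (f (if dir0 then south p else west p)) (map f (walk p D eN))
  = pairmap (fun x y => x == y) dir0 (rcons D eN).
Proof.
elim: D p dir0 => [|b D IH] p dir0 h /=.
  by rewrite -(tile_sign dir0 eN (h p _)) ?inE ?eqxx.
rewrite (tile_sign dir0 b (h p _)) ?inE ?eqxx //; congr (_ :: _).
have -> : f (out p b) = f (if b then south (step p b) else west (step p b)) by rewrite /out; case: (b).
by apply: IH => r hr; apply: h; rewrite inE hr orbT.
Qed.

Lemma sign_pairmap f D eN : sign_function D f ->
  pairmap (fun x y => x != y) (f (south (0, 0))) (map f (walk (0, 0) D eN))
  = pairmap (fun x y => x == y) true (rcons D eN).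
Proof. by move=> h; apply: (sign_pairmap_gen true) => r /h. Qed.

Fixpoint sb (s : bool) (a : seq nat) : seq bool :=
  if a is x :: a' then nseq x s ++ sb (~~ s) a' else [::].

Lemma sign_blocks_sb s a : sign_blocks s a = sb s a.
Proof.
elim: a s => [|x a IH] s //=.
rewrite /sign_blocks /= -IH /sign_blocks; congr (_ ++ _).
rewrite -[1]addn0 iotaDl -map_comp; congr flatten; apply: eq_map => i /=.
by rewrite add0n; case: (odd i); rewrite /= ?negbK.
Qed.

Definition mat := (nat * nat * nat * nat)%type.
Definition mmul (m n : mat) : mat :=
  let: (a, b, c, d) := m in let: (e, f, g, h) := n in
  (a * e + b * g, a * f + b * h, c * e + d * g, c * f + d * h).
Definition Mx (x : nat) : mat := (x, 1, 1, 0).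
Definition I2 : mat := (1, 0, 0, 1).
Definition Pm (a : seq nat) := foldr (fun x m => mmul (Mx x) m) I2 a.
Definition vmul (v : nat * nat) (m : mat) :=
  let: (a, b, c, d) := m in (v.1 * a + v.2 * c, v.1 * b + v.2 * d).
Definition trm (m : mat) : mat := let: (a, b, c, d) := m in (a, c, b, d).

Lemma mmulA m n p : mmul (mmul m n) p = mmul m (mmul n p).
Proof.
case: m => [[[a b] c] d]; case: n => [[[e f] g] h]; case: p => [[[i j] k] l] /=.
congr (_, _, _, _); rewrite -?plusE -?multE; ring.
Qed.

Ltac nring := rewrite -?plusE -?multE; ring.

Lemma mmul1m m : mmul I2 m = m.
Proof. case: m => [[[a b] c] d] /=; congr (_, _, _, _); nring. Qed.
Lemma mmulm1 m : mmul m I2 = m.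
Proof. case: m => [[[a b] c] d] /=; congr (_, _, _, _); nring. Qed.

Lemma Pm_cons x s : Pm (x :: s) = mmul (Mx x) (Pm s).
Proof. by []. Qed.

Lemma Pm_cat s t : Pm (s ++ t) = mmul (Pm s) (Pm t).
Proof.
elim: s => [|x s IH]; first by rewrite cat0s [Pm [::]]/= mmul1m.
by rewrite cat_cons Pm_cons IH Pm_cons mmulA.
Qed.

Lemma trm_mmul m n : trm (mmul m n) = mmul (trm n) (trm m).
Proof.
case: m => [[[a b] c] d]; case: n => [[[e f] g] h] /=; congr (_, _, _, _); nring.
Qed.

Lemma Pm_rev a : Pm (rev a) = trm (Pm a).
Proof.
elim: a => [|x a IH]; first by [].
by rewrite rev_cons -cats1 Pm_cat IH !Pm_cons trm_mmul [Pm [::]]/= mmulm1.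
Qed.

Lemma vmulA v m n : vmul (vmul v m) n = vmul v (mmul m n).
Proof.
case: v => v1 v2; case: m => [[[a b] c] d]; case: n => [[[e f] g] h] /=.
congr (_, _); nring.
Qed.

Lemma foldl_nseq w k : foldl stepAB w (nseq k false) = (w.1 + k * w.2, w.2).
Proof.
elim: k w => [|k IH] [w1 w2] /=; first by rewrite addn0.
by rewrite IH /=; congr (_, _); rewrite mulSn addnA.
Qed.

Fixpoint fl (a : seq nat) : seq bool :=
  match a with
  | [::] => [::]
  | [:: x] => nseq x.-1 false
  | x :: ((y :: _) as r) => nseq x.-1 false ++ true :: fl r
  end.

Lemma foldl_nseq_true w k l :
  foldl stepAB w (nseq k false ++ true :: l) = foldl stepAB (w.1 + k * w.2 + w.2, w.1 + k * w.2) l.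
Proof. by rewrite foldl_cat foldl_nseq. Qed.

Lemma fold_fl x r v : 0 < x -> all (fun x => 0 < x) r ->
  foldl stepAB (vmul v (Mx 1)) (fl (x :: r)) = vmul v (Pm (x :: r)).
Proof.
elim: r x v => [|y r IH] x v hx hr.
  rewrite /= foldl_nseq; case: v => v1 v2 /=.
  case: x hx => // x _ /=; congr (_, _); nring.
move: hr => /= /andP [hy hr].
rewrite foldl_nseq_true.
transitivity (foldl stepAB (vmul (vmul v (Mx x)) (Mx 1)) (fl (y :: r))).
  congr foldl; case: v => v1 v2; case: x hx => // x _ /=; congr (_, _); nring.
by rewrite IH // vmulA.
Qed.

Lemma pairmap_nseq s k l :
  pairmap (fun x y : bool => x != y) s (nseq k s ++ l) = nseq k false ++ pairmap (fun x y : bool => x != y) s l.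
Proof. by elim: k => [|k IH] //=; rewrite eqxx IH. Qed.

Lemma sb_fl x r s : 0 < x -> all (fun x => 0 < x) r ->
  exists rest, sb s (x :: r) = s :: rest /\ pairmap (fun x y : bool => x != y) s rest = fl (x :: r).
Proof.
elim: r x s => [|y r IH] x s hx hr.
  case: x hx => // x _; exists (nseq x s ++ [::]); split => //.
  by rewrite pairmap_nseq cats0.
move: hr => /= /andP [hy hr].
have [rest [e1 e2]] := IH y (~~ s) hy hr.
case: x hx => // x _; exists (nseq x s ++ sb (~~ s) (y :: r)); split => //.
rewrite pairmap_nseq e1 /= e2.
by case: s {e1 e2}.
Qed.

Definition tl (m : mat) := m.1.1.1.

Lemma m_snake_Pm a D : all (fun x => 0 < x) a -> is_snake a D -> m_snake a D = tl (Pm a).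
Proof.
move=> hpos [[hs ->]|[hs [_ [f [eN [s [sf heq]]]]]]].
  rewrite /m_snake hs.
  case: a hpos hs => [|x [|y r]] //=.
    by case/andP => hx _ h; have -> : x = 1 by lia.
  by case/and3P => hx hy _ h; exfalso; lia.
rewrite /m_snake leqNgt hs /= (num_pm_fold D eN) -(sign_pairmap eN sf).
case: a hpos hs heq => [|x r] //= /andP [hx hr] hs heq.
have [rest [e1 e2]] := sb_fl s hx hr.
rewrite sign_blocks_sb e1 in heq; case: heq => -> ->.
rewrite e2 -[(1, 1)]/(vmul (1, 0) (Mx 1)) fold_fl // /tl.
by rewrite Pm_cons; case: (Pm r) => [[[? ?] ?] ?] /=; rewrite !mul1n !mul0n !addn0.
Qed.

Theorem theorem3p9 (a : seq nat) (D Dpal D' : seq bool) :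
  a != [::] ->
  all (fun x => 0 < x) a ->
  is_snake a D ->
  is_snake (rev a ++ a) Dpal ->
  is_snake (behead a) D' ->
  m_snake (rev a ++ a) Dpal = m_snake a D ^ 2 + m_snake (behead a) D' ^ 2.
Proof.
move=> ha hpos h1 h2 h3.
have hp2 : all (fun x => 0 < x) (rev a ++ a) by rewrite all_cat all_rev hpos.
have hp3 : all (fun x => 0 < x) (behead a) by case: a hpos {ha h1 h2 h3 hp2} => //= x r /andP [].
rewrite (m_snake_Pm hp2 h2) (m_snake_Pm hpos h1) (m_snake_Pm hp3 h3).
rewrite Pm_cat Pm_rev.
case: a ha {hpos h1 h2 h3 hp2 hp3} => [|x r] // _ /=.
rewrite /tl; case: (Pm r) => [[[e f] g] h] /=.
rewrite !expnS expn0 !muln1; nring.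
Qed.
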